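(* Let $r\ge4$, $l\ge r$, $\alpha,\beta\in\mathbb N$ with $\alpha+\beta=l-(r-2)$, and let $(X(N_G,\Delta_G),\mathrm{orb}(\sigma_0))$ be the Gorenstein cyclic quotient singularity of type $\frac1l(1,\ldots,1,\alpha,\beta)$ (with $r-2$ weights equal to $1$). If this singularity admits a $T_{N_G}$-equivariant, crepant, full resolution, then $\gcd(\alpha,\beta,l)\in\{1,r-2\}$. Moreover, if $\gcd(\alpha,\beta,l)=1$, then $[\mathfrak t_1]_{r-2}=[\mathfrak t_2]_{r-2}=1$, where $\mathfrak t_1=\gcd(\alpha,l)$ and $\mathfrak t_2=\gcd(\beta,l)=\gcd(\alpha+(r-2),l)$.
   Context: For integers $\mu$ and $\nu\ge1$, $[\mu]_\nu$ is the unique integer in $\{0,\ldots,\nu-1\}$ congruent to $\mu$ mod $\nu$. Type $\frac1l(\alpha_1,\ldots,\alpha_r)$: $G\subset\mathrm{GL}(r,\mathbb C)$ is generated by $\mathrm{diag}(\zeta^{\alpha_1},\ldots,\zeta^{\alpha_r})$, $\zeta=e^{2\pi\sqrt{-1}/l}$; $N_G=\mathbb Z^r+\mathbb Z\frac1l(\alpha_1,\ldots,\alpha_r)^{\intercal}$, $\sigma_0$ the positive orthant of $\mathbb R^r$, $\Delta_G$ its face fan, $X(N_G,\Delta_G)=\mathbb C^r/G$ with torus $T_{N_G}$. A crepant $T_{N_G}$-equivariant full resolution is a proper birational toric morphism from a smooth toric variety given by a refinement of $\Delta_G$, with trivial discrepancy. *)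

(* Defs.v *)
(* Combinatorial (fan-theoretic) encoding of T_N-equivariant
   crepant full resolutions of C^r/G for a cyclic G of type 1/l(a_1,...,a_r). *)
From mathcomp Require Import all_boot all_order all_algebra.
Set Implicit Arguments. Unset Strict Implicit. Unset Printing Implicit Defensive.
Import Order.TTheory GRing.Theory Num.Theory.
Local Open Scope ring_scope.

(* vectors of N_G ⊗ Q = Q^r are row vectors 'rV[rat]_r *)
Notation vec r := 'rV[rat]_r.

Definition inNG (r l : nat) (a : 'I_r -> nat) (v : vec r) : Prop :=
  exists k : int, forall i : 'I_r, exists z : int,
    v 0 i = z%:~R + k%:~R * ((a i)%:R / l%:R).

Definition cone r (s : seq (vec r)) : vec r -> Prop :=
  fun x => exists c : 'I_(size s) -> rat,
    (forall i, 0 <= c i) /\ x = \sum_(i < size s) c i *: s`_i.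

Definition orthant r : vec r -> Prop := fun x => forall i, 0 <= x 0 i.

Definition dotv r (u x : vec r) : rat := \sum_i u 0 i * x 0 i.

Definition is_face r (F C : vec r -> Prop) : Prop :=
  exists u : vec r, (forall x, C x -> 0 <= dotv u x) /\
    (forall x, F x <-> (C x /\ dotv u x = 0)).

Definition is_Zbasis r l (a : 'I_r -> nat) (B : 'I_r -> vec r) : Prop :=
  (forall i, inNG l a (B i)) /\
  row_free (\matrix_(i < r) B i) /\
  (forall v, inNG l a v -> exists z : 'I_r -> int, v = \sum_i (z i)%:~R *: B i).

Definition smooth_gens r l (a : 'I_r -> nat) (s : seq (vec r)) : Prop :=
  exists B : 'I_r -> vec r, is_Zbasis l a B /\ uniq s /\
    (forall v, v \in s -> exists i, v = B i).

(* A fan Sigma (list of cones, each given by its generators) which is a smooth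
   fan in N_G refining Delta_G with the same support (proper birational),
   and whose ray generators (= primitive generators, as basis elements) all lie
   on the hyperplane <(1,..,1), v> = 1 (trivial discrepancy). *)
Definition crepant_full_resolution r l (a : 'I_r -> nat)
    (Sigma : seq (seq (vec r))) : Prop :=
  (forall s, s \in Sigma -> smooth_gens l a s) /\
  (forall s, s \in Sigma -> forall F, is_face F (cone s) ->
     exists t, t \in Sigma /\ (forall x, cone t x <-> F x)) /\
  (forall s t, s \in Sigma -> t \in Sigma ->
     is_face (fun x => cone s x /\ cone t x) (cone s) /\
     is_face (fun x => cone s x /\ cone t x) (cone t)) /\
  (forall x, orthant x <-> exists s, s \in Sigma /\ cone s x) /\
  (forall s, s \in Sigma -> forall v, v \in s -> \sum_i v 0 i = 1).

Definition wt (r alpha beta : nat) : 'I_r -> nat :=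
  fun i => if (i < r - 2)%N then 1%N else if (i == (r - 2)%N :> nat) then alpha else beta.

(* Main.v *)
Require Import Defs.
From mathcomp Require Import all_boot all_order all_algebra.
From mathcomp Require Import zify ring lra.
From Stdlib Require Import Classical.
Set Implicit Arguments. Unset Strict Implicit. Unset Printing Implicit Defensive.
Import Order.TTheory GRing.Theory Num.Theory.
Local Open Scope ring_scope.

Definition isZ (x : rat) := exists z : int, x = z%:~R.

Lemma isZ_int (z : int) : isZ z%:~R. Proof. by exists z. Qed.
Lemma isZ_nat (n : nat) : isZ n%:R. Proof. by exists n%:Z. Qed.
Lemma isZ_add x y : isZ x -> isZ y -> isZ (x + y).
Proof. by move=> [a ->] [b ->]; exists (a + b); rewrite intrD. Qed.
Lemma isZ_opp x : isZ x -> isZ (- x).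
Proof. by move=> [a ->]; exists (- a); rewrite intrN. Qed.
Lemma isZ_sub x y : isZ x -> isZ y -> isZ (x - y).
Proof. by move=> hx hy; apply: isZ_add => //; apply: isZ_opp. Qed.
Lemma isZ_mul x y : isZ x -> isZ y -> isZ (x * y).
Proof. by move=> [a ->] [b ->]; exists (a * b); rewrite intrM. Qed.
Lemma isZ0 : isZ 0. Proof. by exists 0. Qed.

Lemma isZ_01 x : isZ x -> 0 < x -> x < 1 -> False.
Proof.
move=> [z ->]; rewrite ltr0z ltrz1 => h1 h2. lia.
Qed.

Lemma isZ_ge1 x : isZ x -> 0 < x -> 1 <= x.
Proof.
move=> [z ->]; rewrite ltr0z ler1z => h1. lia.
Qed.

Lemma isZ_gcd (a b : nat) K : isZ (a%:R * K) -> isZ (b%:R * K) ->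
  isZ ((gcdn a b)%:R * K).
Proof.
move=> ha hb; have [u [v e]] := Bezoutz a b.
have -> : (gcdn a b)%:R = (gcdz a b)%:~R :> rat by [].
rewrite -e intrD !intrM mulrDl -!mulrA -!pmulrn.
by apply: isZ_add; apply: isZ_mul => //; apply: isZ_int.
Qed.

Lemma dotv_sum r (c : vec r) (x : 'I_r -> rat) (B : 'I_r -> vec r) :
  dotv c (\sum_i x i *: B i) = \sum_i x i * dotv c (B i).
Proof.
rewrite /dotv.
under eq_bigr => k _ do rewrite summxE mulr_sumr.
rewrite exchange_big /=; apply: eq_bigr => i _; rewrite mulr_sumr.
by apply: eq_bigr => k _; rewrite mxE; ring.
Qed.

Lemma dual r l (a : 'I_r -> nat) B : is_Zbasis l a B -> forall j0,
  exists c : vec r, (forall v, inNG l a v -> isZ (dotv c v)) /\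
    (forall j, dotv c (B j) = (j == j0)%:R).
Proof.
move=> [hB [hfree hspan]] j0.
set M := \matrix_(i < r) B i.
have hU : M \in unitmx by rewrite -row_free_unit.
exists (\row_i (invmx M) i j0).
have hB' : forall j, dotv (\row_i (invmx M) i j0) (B j) = (j == j0)%:R.
  move=> j; rewrite /dotv.
  have -> : (j == j0)%:R = (M *m invmx M) j j0 by rewrite mulmxV // mxE.
  rewrite mxE; apply: eq_bigr => k _; rewrite !mxE mulrC; congr (_ * _).
  idtac.
split=> // v /hspan [z ->].
rewrite dotv_sum (bigD1 j0) //= hB' eqxx mulr1 big1 ?addr0; first exact: isZ_int.
by move=> i /negPf hi; rewrite hB' hi mulr0.
Qed.

Lemma LF0 r l (a : 'I_r -> nat) v : (0 < l)%N -> inNG l a v ->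
  exists K : rat, isZ (K * l%:R) /\ forall i, isZ (v 0 i - K * (a i)%:R).
Proof.
move=> l0 [k hk]; exists (k%:~R / l%:R).
have ln0 : (l%:R : rat) != 0 by rewrite pnatr_eq0 -lt0n.
split; first by rewrite mulfVK //; apply: isZ_int.
move=> i; have [z ->] := hk i; exists z.
by rewrite mulrA [_ * (a i)%:R]mulrC -mulrA; field.
Qed.

Lemma cover r l a Sigma (p : vec r) : crepant_full_resolution l a Sigma -> orthant p ->
  exists s, s \in Sigma /\ smooth_gens l a s /\
  exists c : 'I_(size s) -> rat, (forall j, 0 <= c j) /\
   (forall k, p 0 k = \sum_j c j * s`_j 0 k) /\
   forall j : 'I_(size s), [/\ inNG l a s`_j, orthant s`_j, \sum_i s`_j 0 i = 1 & s`_j \in s].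
Proof.
move=> [hs [_ [_ [hsupp hcrep]]]] /hsupp [s [sS [c [c0 ep]]]].
exists s; split=> //; split; first exact: hs.
exists c; split=> //; split.
  by move=> k; rewrite ep summxE; apply: eq_bigr => j _; rewrite mxE.
move=> j; have jin : s`_j \in s by apply: mem_nth.
split=> //.
- have [B [[hB _] [_ hBs]]] := hs s sS.
  by have [i ->] := hBs _ jin.
- apply/hsupp; exists s; split=> //; exists (fun i => (i == j)%:R); split.
    by move=> i; rewrite ler0n.
  rewrite (bigD1 j) //= eqxx scale1r big1 ?addr0 // => i /negPf ->.
  by rewrite scale0r.
- exact: (hcrep s sS).
Qed.

Lemma pos_coef n (c x : 'I_n -> rat) : (forall j, 0 <= c j) -> (forall j, 0 <= x j) ->
  \sum_j c j * x j = 0 -> forall j, c j = 0 \/ x j = 0.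
Proof.
move=> hc hx hs j.
have h0 : forall i, true -> 0 <= c i * x i by move=> i _; apply: mulr_ge0.
have /eqP : c j * x j = 0 by exact: (@psumr_eq0P _ _ _ _ h0 hs j isT).
by rewrite mulf_eq0 => /orP [/eqP ->|/eqP ->]; [left|right].
Qed.

Lemma coord_le1 r (v : vec r) i : orthant v -> \sum_k v 0 k = 1 -> v 0 i <= 1.
Proof.
move=> hv <-; rewrite (bigD1 i) //= lerDl; apply: sumr_ge0 => k _; exact: hv.
Qed.

Lemma coord2_le1 r (v : vec r) i j : i != j -> orthant v -> \sum_k v 0 k = 1 ->
  v 0 i + v 0 j <= 1.
Proof.
move=> ij hv <-; rewrite (bigD1 i) //= (bigD1 j) 1?eq_sym //= addrA lerDl.
apply: sumr_ge0 => k _; exact: hv.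
Qed.

Lemma sum3 m (F : 'I_m.+2 -> rat) :
  \sum_i F i = \sum_(i < m) F (inord i) + F (inord m) + F ord_max.
Proof.
rewrite big_ord_recr big_ord_recr /=; congr (_ + F _ + _).
  apply: eq_bigr => i _; congr F; apply: val_inj; rewrite /= inordK //.
  by apply: (leq_trans (ltn_ord i)); rewrite ltnW.
by apply: val_inj; rewrite /= inordK.
Qed.

Lemma isZ_small x : isZ x -> -1 < x -> x < 1 -> x = 0.
Proof.
move=> [z ->]; rewrite -[-1]/((-1)%:~R) ltr_int ltrz1 => h1 h2.
have -> : z = 0 by lia. by [].
Qed.

Lemma inord_ne m (i : 'I_m.+2) : (i < m)%N -> i != inord m /\ i != ord_max.
Proof.
move=> im; split; apply/eqP => /(congr1 val) /=; rewrite ?inordK //; lia.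
Qed.

Lemma ltm_of m (i : 'I_m.+2) : i != inord m -> i != ord_max -> (i < m)%N.
Proof.
move=> /eqP h1 /eqP h2; have := ltn_ord i.
have h1' : (i : nat) != m by apply/eqP => e; apply: h1; apply: val_inj; rewrite /= inordK.
have h2' : (i : nat) != m.+1 by apply/eqP => e; apply: h2; apply: val_inj.
lia.
Qed.

Lemma juniorJ m (d : nat) (v : vec m.+2) K : (1 <= d)%N -> (d < m)%N ->
  orthant v -> \sum_i v 0 i = 1 -> v 0 (inord m) = 0 -> v 0 ord_max = 0 ->
  isZ (d%:R * K) -> (forall i : 'I_m.+2, (i < m)%N -> isZ (v 0 i - K)) ->
  exists i : 'I_m.+2, (i < m)%N /\ v = delta_mx 0 i.
Proof.
move=> d1 dm hv hs vm vM hdK hK.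
have hs' : \sum_(i < m) v 0 (inord i) = 1 by move: hs; rewrite sum3 vm vM !addr0.
have inordm : forall i : 'I_m, ((inord i : 'I_m.+2) < m)%N.
  by move=> i; rewrite inordK //; apply: (leq_trans (ltn_ord i)); rewrite ltnW.
case: (classic (forall i : 'I_m.+2, (i < m)%N -> isZ (v 0 i))) => [hint|hnint].
- have [i vi] : exists i, v 0 i != 0.
    apply: NNPP => hne; move: hs; rewrite big1 => [/eqP|j _]; first by rewrite eq_sym oner_eq0.
    by apply/eqP; apply: NNPP => hj; apply: hne; exists j; apply/negP.
  have im : (i < m)%N by apply: ltm_of; apply/eqP => e; move: vi; rewrite e ?vm ?vM eqxx.
  have vi1 : 1 <= v 0 i by apply: isZ_ge1; [exact: hint | rewrite lt0r vi hv].
  have vi1' : v 0 i = 1 by apply/eqP; rewrite eq_le vi1 coord_le1.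
  exists i; split=> //; apply/rowP => j; rewrite !mxE eqxx /=.
  case: (eqVneq j i) => [-> //|ji] /=.
  have := coord2_le1 ji hv hs; rewrite vi1' => h.
  by apply/eqP; rewrite eq_le hv; lra.
- have [i0 [i0m ni0]] : exists i0 : 'I_m.+2, (i0 < m)%N /\ ~ isZ (v 0 i0).
    apply: NNPP => hne; apply: hnint => i im; apply: NNPP => ni.
    by apply: hne; exists i.
  have x0 : 0 < (v 0 i0).
    rewrite lt0r hv andbT; apply/eqP => e; apply: ni0; rewrite e; exact: isZ0.
  have x1 : (v 0 i0) < 1.
    rewrite lt_neqAle coord_le1 // andbT; apply/eqP => e; apply: ni0; rewrite e.
    exact: isZ_nat 1.
  have hall : forall i : 'I_m.+2, (i < m)%N -> v 0 i = (v 0 i0).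
    move=> i im; have hz : isZ (v 0 i - (v 0 i0)).
      have -> : v 0 i - (v 0 i0) = (v 0 i - K) - ((v 0 i0) - K) by ring.
      by apply: isZ_sub; apply: hK.
    have := isZ_small hz; have := hv i; have := coord_le1 i hv hs.
    move=> h1 h2 h3; apply/eqP; rewrite -subr_eq0; apply/eqP; apply: h3; lra.
  have mx : (v 0 i0) *+ m = 1.
    rewrite -hs' (eq_bigr (fun _ => v 0 i0)) ?sumr_const ?card_ord // => i _; exact: hall.
  have hdx : isZ (d%:R * (v 0 i0)).
    have -> : d%:R * (v 0 i0) = d%:R * ((v 0 i0) - K) + d%:R * K by ring.
    by apply: isZ_add => //; apply: isZ_mul; [apply: isZ_nat | apply: hK].
  exfalso; apply: (isZ_01 hdx).
    by apply: mulr_gt0 => //; rewrite ltr0n.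
  have : d%:R * v 0 i0 < m%:R * v 0 i0 by rewrite ltr_pM2r // ltr_nat.
  by rewrite [m%:R * _]mulr_natl mx.
Qed.

Lemma dotv_delta r (c : vec r) i : dotv c (delta_mx 0 i) = c 0 i.
Proof.
rewrite /dotv (bigD1 i) //= mxE !eqxx mulr1 big1 ?addr0 // => j /negPf ji.
by rewrite mxE ji andbF mulr0.
Qed.

Lemma dual_gens r l a s (i0 : 'I_r) : smooth_gens l a s -> delta_mx 0 i0 \in s ->
  exists c : vec r, (forall v, inNG l a v -> isZ (dotv c v)) /\
    (forall v, v \in s -> dotv c v = (v == delta_mx 0 i0)%:R).
Proof.
move=> [B [hZ [_ hBs]]] /hBs [j0 e0].
have [c [hc hcB]] := dual hZ j0.
exists c; split=> // v /hBs [j ->]; rewrite hcB e0.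
case: (eqVneq j j0) => [-> |ne]; first by rewrite !eqxx.
case: (eqVneq (B j) (B j0)) => [e|//].
by move: (hcB j); rewrite e hcB eqxx (negPf ne) => /eqP; rewrite oner_eq0.
Qed.

Lemma delta_eq r (i j : 'I_r) : (delta_mx 0 i == delta_mx 0 j :> vec r) = (i == j).
Proof.
apply/eqP/eqP => [e|-> //]; move/rowP/(_ i): e; rewrite !mxE !eqxx /=.
by case: (eqVneq i j) => // _ /eqP; rewrite oner_eq0.
Qed.

Lemma sum_two r (F : 'I_r -> rat) (i0 i1 : 'I_r) : i0 != i1 ->
  (forall i, i != i0 -> i != i1 -> F i = 0) -> \sum_i F i = F i0 + F i1.
Proof.
move=> ne h; rewrite (bigD1 i0) //= (bigD1 i1) 1?eq_sym //= big1 ?addr0 //.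
by move=> i /andP [] ? ?; apply: h.
Qed.

Lemma natr_divE (n d : nat) : (d %| n)%N -> (0 < d)%N -> (n %/ d)%:R = n%:R / d%:R :> rat.
Proof.
move=> dn d0; apply: natr_div => //; by rewrite unitfE pnatr_eq0 -lt0n.
Qed.

Section Setting.
End Setting.

Lemma gen_face m (p : vec m.+2) (s : seq (vec m.+2))
  (c : 'I_(size s) -> rat) (k : 'I_m.+2) :
  (forall j, 0 <= c j) -> (forall k, p 0 k = \sum_j c j * s`_j 0 k) ->
  (forall j : 'I_(size s), orthant s`_j) -> p 0 k = 0 ->
  forall j, c j != 0 -> s`_j 0 k = 0.
Proof.
move=> c0 hp hg pk j cj.
have := pos_coef c0 (fun j => hg j k) (esym (etrans (esym pk) (hp k))).
by move/(_ j) => [e|//]; move: cj; rewrite e eqxx.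
Qed.

Lemma part1 m l alpha beta (a : 'I_m.+2 -> nat) Sigma :
  (2 <= m)%N -> (0 < l)%N ->
  (forall i : 'I_m.+2, (i < m)%N -> a i = 1%N) -> a (inord m) = alpha -> a ord_max = beta ->
  (1 < gcdn (gcdn alpha beta) l)%N -> (gcdn (gcdn alpha beta) l < m)%N ->
  crepant_full_resolution l a Sigma -> False.
Proof.
move=> m2 l0 ha1 haM haM1 d1 dm hres.
set d := gcdn (gcdn alpha beta) l in d1 dm.
have dl : (d %| l)%N by apply: dvdn_gcdr.
have dA : (d %| alpha)%N by rewrite /d; apply: (dvdn_trans (dvdn_gcdl _ _)); apply: dvdn_gcdl.
have dB : (d %| beta)%N by rewrite /d; apply: (dvdn_trans (dvdn_gcdl _ _)); apply: dvdn_gcdr.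
set M : 'I_m.+2 := inord m.
have [MneM1 M1neM] : M != ord_max /\ (ord_max : 'I_m.+2) != M.
  have e : M != ord_max by apply/eqP => /(congr1 val); rewrite /= inordK //; lia.
  by split=> //; rewrite eq_sym.
set p : vec m.+2 := \row_i (if (i < m)%N then 1 else 0).
have hpo : orthant p by move=> i; rewrite mxE; case: ifP.
have [s [sS [hsm [c [c0 [hp hg]]]]]] := cover hres hpo.
have pM : p 0 M = 0 by rewrite mxE /M inordK // ltnn.
have pM1 : p 0 ord_max = 0 by rewrite mxE /= ltnNge leqnSn.
have hgo : forall j : 'I_(size s), orthant s`_j by move=> j; case: (hg j).
have hJ : forall j : 'I_(size s), c j != 0 -> exists i' : 'I_m.+2, (i' < m)%N /\ s`_j = delta_mx 0 i'.
  move=> j cj.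
  have gM := gen_face c0 hp hgo pM cj.
  have gM1 := gen_face c0 hp hgo pM1 cj.
  have [hN ho hs1 _] := hg j.
  have [K [hKl hK]] := LF0 l0 hN.
  have hKa : isZ (alpha%:R * K).
    by move: (hK M); rewrite gM haM sub0r mulrC => /isZ_opp; rewrite opprK.
  have hKb : isZ (beta%:R * K).
    by move: (hK ord_max); rewrite gM1 haM1 sub0r mulrC => /isZ_opp; rewrite opprK.
  have hKd : isZ (d%:R * K).
    by rewrite /d; apply: isZ_gcd; [apply: isZ_gcd | rewrite mulrC].
  apply: (juniorJ (d := d) (K := K)) => //; first by lia.
  by move=> i im; move: (hK i); rewrite ha1 // mulr1.
have hE : forall i : 'I_m.+2, (i < m)%N -> delta_mx 0 i \in s.
  move=> i im; apply: NNPP => ni.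
  have : p 0 i = 0.
    rewrite hp big1 // => j _.
    case: (eqVneq (c j) 0) => [->|cj]; first by rewrite mul0r.
    have [i' [_ e]] := hJ j cj.
    have ii' : i' != i by apply/eqP => e'; apply: ni; rewrite -e' -e; apply: mem_nth.
    by rewrite e mxE eq_sym (negPf ii') andbF mulr0.
  by rewrite mxE im => /eqP; rewrite oner_eq0.
have m0 : (0 < m)%N by lia.
have [c' [hc'Z hc's]] := dual_gens hsm (hE ord0 m0).
have hc'i : forall i : 'I_m.+2, (i < m)%N -> c' 0 i = (i == ord0)%:R.
  by move=> i im; rewrite -dotv_delta hc's ?hE // delta_eq.
set u : vec m.+2 := \row_i (if (i < m)%N then d%:R^-1 else 0).
have d0 : (0 < d)%N by lia.
have dR : (d%:R : rat) != 0 by rewrite pnatr_eq0 -lt0n.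
have lR : (l%:R : rat) != 0 by rewrite pnatr_eq0 -lt0n.
have hu : inNG l a u.
  exists (l %/ d)%:Z => i.
  exists (if (i < m)%N then 0 else - (a i %/ d)%:Z).
  rewrite mxE; case: ifP => im.
    by rewrite ha1 // add0r -!pmulrn natr_divE //; field; rewrite lR dR.
  have hai : (d %| a i)%N.
    have [->|ne] := eqVneq i M; first by rewrite haM.
    have -> : i = ord_max.
      apply: val_inj => /=; have := ltn_ord i.
      have : (i : nat) != m by apply: contra ne => /eqP e; apply/eqP/val_inj; rewrite /= inordK // e.
      have im2 : (m <= i)%N by rewrite leqNgt im.
      move=> h1 h2; apply/eqP; rewrite eqn_leq -ltnS h2 /= ltn_neqAle eq_sym h1 im2 //.
    by rewrite haM1.
  by rewrite mulrNz -!pmulrn !natr_divE //; field; rewrite lR dR.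
have := hc'Z _ hu.
rewrite /dotv (sum_two (i0 := ord0) (i1 := ord_max)).
- rewrite !mxE m0 /= ltnNge leqnSn /= mulr0 addr0 hc'i // eqxx mul1r => hz.
  apply: (isZ_01 hz); first by rewrite invr_gt0 ltr0n.
  by rewrite invf_lt1 ?ltr0n // ltr1n.
- by apply/eqP => /(congr1 val) /=.
move=> i i0 i1; rewrite mxE.
case: ifP => im; first by rewrite hc'i // (negPf i0) mul0r.
by rewrite mulr0.
Qed.

Lemma latt2 m l (a : 'I_m.+2 -> nat) (ia ib : 'I_m.+2) alpha' beta' (v : vec m.+2) :
  (0 < l)%N -> (forall i : 'I_m.+2, (i < m)%N -> a i = 1%N) -> a ia = alpha' -> a ib = beta' ->
  inNG l a v -> v 0 ia = 0 ->
  exists K, [/\ isZ (l%:R * K), isZ (alpha'%:R * K), isZ ((gcdn alpha' l)%:R * K),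
     (forall i : 'I_m.+2, (i < m)%N -> isZ (v 0 i - K)) & isZ (v 0 ib - K * beta'%:R)].
Proof.
move=> l0 ha1 hia hib hv via.
have [K [hKl hK]] := LF0 l0 hv.
have hKa : isZ (alpha'%:R * K).
  by move: (hK ia); rewrite via hia sub0r mulrC => /isZ_opp; rewrite opprK.
exists K; split.
- by rewrite mulrC.
- exact: hKa.
- by apply: isZ_gcd => //; rewrite mulrC.
- by move=> i im; move: (hK i); rewrite ha1 // mulr1.
- by move: (hK ib); rewrite hib.
Qed.

Lemma sum_ab m (F : 'I_m.+2 -> rat) (ia ib : 'I_m.+2) :
  (ia = inord m /\ ib = ord_max) \/ (ia = ord_max /\ ib = inord m) ->
  \sum_i F i = \sum_(i < m) F (inord i) + F ia + F ib.
Proof.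
rewrite sum3 => [[[-> ->]|[-> ->]]] //; by rewrite -!addrA [X in _ + X]addrC.
Qed.

Lemma part2 m l alpha' beta' (a : 'I_m.+2 -> nat) Sigma (ia ib : 'I_m.+2) :
  (ia = inord m /\ ib = ord_max) \/ (ia = ord_max /\ ib = inord m) ->
  (2 <= m)%N -> (0 < l)%N ->
  (forall i : 'I_m.+2, (i < m)%N -> a i = 1%N) -> a ia = alpha' -> a ib = beta' ->
  gcdn (gcdn alpha' beta') l = 1%N -> (alpha' + beta' + m)%N = l ->
  crepant_full_resolution l a Sigma -> (gcdn alpha' l %% m)%N = 1%N.
Proof.
move=> hab m2 l0 ha1 hia hib d1 hl hres.
have m0 : (0 < m)%N by lia.
have Mlt : ((inord m : 'I_m.+2) : nat) = m by rewrite inordK.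
have [ianm ibnm] : ~~ (ia < m)%N /\ ~~ (ib < m)%N.
  by case: hab => [[-> ->]|[-> ->]]; rewrite /= ?Mlt ltnn ?ltnNge ?leqnSn.
have iab : ia != ib.
  by case: hab => [[-> ->]|[-> ->]]; apply/eqP => /(congr1 val); rewrite /= Mlt; lia.
have hrest : forall i : 'I_m.+2, ~~ (i < m)%N -> i != ib -> i = ia.
  move=> i im ne; apply/eqP; apply: NNPP => /negP ne'.
  have := ltm_of (i := i); case: hab ne ne' => [[-> ->]|[-> ->]] ne ne' h.
    by move: im; rewrite h.
  by move: im; rewrite h.
have ib0 : ib != ord0 by apply: contra ibnm => /eqP ->.
set t := gcdn alpha' l.
have t0 : (0 < t)%N by rewrite gcdn_gt0 l0 orbT.
have tl : (t %| l)%N by apply: dvdn_gcdr.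
have ta : (t %| alpha')%N by apply: dvdn_gcdl.
have tR : (t%:R : rat) != 0 by rewrite pnatr_eq0 -lt0n.
have tRp : (0 : rat) < t%:R by rewrite ltr0n.
have lR : (l%:R : rat) != 0 by rewrite pnatr_eq0 -lt0n.
set p : vec m.+2 := \row_i (if (i < m)%N then 1 else if i == ib then (2 * t%:R)^-1 else 0).
have hpo : orthant p.
  move=> i; rewrite mxE; case: ifP => // _; case: ifP => // _.
  by rewrite invr_ge0 mulr_ge0 ?ler0n.
have [s [sS [hsm [c [c0 [hp hg]]]]]] := cover hres hpo.
have hgo : forall j : 'I_(size s), orthant s`_j by move=> j; case: (hg j).
have pia : p 0 ia = 0 by rewrite mxE (negPf ianm) (negPf iab).
have pib : p 0 ib = (2 * t%:R)^-1 by rewrite mxE (negPf ibnm) eqxx.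
have hface : forall j : 'I_(size s), c j != 0 ->
   s`_j 0 ia = 0 /\ isZ (t%:R * s`_j 0 ib) /\
   (s`_j 0 ib = 0 -> exists i' : 'I_m.+2, (i' < m)%N /\ s`_j = delta_mx 0 i') /\
   (forall i : 'I_m.+2, (i < m)%N -> isZ (t%:R * s`_j 0 i)) /\
   (forall i i' : 'I_m.+2, (i < m)%N -> (i' < m)%N -> isZ (s`_j 0 i - s`_j 0 i')).
  move=> j cj.
  have gia := gen_face c0 hp hgo pia cj.
  have [hN ho hs1 _] := hg j.
  have [K [hKl hKa hKt hKi hKb]] := latt2 l0 ha1 hia hib hN gia.
  split=> //; split.
    have -> : t%:R * s`_j 0 ib = t%:R * (s`_j 0 ib - K * beta'%:R) + beta'%:R * (t%:R * K) by ring.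
    by apply: isZ_add; apply: isZ_mul => //; apply: isZ_nat.
  split.
    move=> gib; apply: (juniorJ (d := 1) (K := K)) => //.
    - by case: hab gia gib => [[-> ->]|[-> ->]].
    - by case: hab gia gib => [[-> ->]|[-> ->]].
    - have -> : (1 : rat) = (gcdn (gcdn alpha' beta') l)%:R by rewrite d1.
      apply: isZ_gcd => //; apply: isZ_gcd => //.
      by move: hKb; rewrite gib sub0r mulrC => /isZ_opp; rewrite opprK.
  split.
    move=> i im; have -> : t%:R * s`_j 0 i = t%:R * (s`_j 0 i - K) + t%:R * K by ring.
    by apply: isZ_add => //; apply: isZ_mul => //; [apply: isZ_nat | apply: hKi].
  move=> i i' im im'; have -> : s`_j 0 i - s`_j 0 i' = (s`_j 0 i - K) - (s`_j 0 i' - K) by ring.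
  by apply: isZ_sub; apply: hKi.
have hE : forall i : 'I_m.+2, (i < m)%N -> delta_mx 0 i \in s.
  move=> i im; apply: NNPP => ni.
  have : p 0 i <= t%:R * p 0 ib.
    rewrite !hp mulr_sumr; apply: ler_sum => j _.
    case: (eqVneq (c j) 0) => [->|cj]; first by rewrite !mul0r mulr0.
    have [gia [gtb [gJ _]]] := hface j cj.
    have cjp : 0 < c j by rewrite lt0r cj c0.
    case: (eqVneq (s`_j 0 ib) 0) => [gb|gb].
      have [i' [_ e]] := gJ gb.
      have ii' : i' != i by apply/eqP => e'; apply: ni; rewrite -e' -e; apply: mem_nth.
      by rewrite gb e mxE eq_sym (negPf ii') andbF !mulr0.
    have gbp : 0 < s`_j 0 ib by rewrite lt0r gb hgo.
    have h1 : 1 <= t%:R * s`_j 0 ib by apply: isZ_ge1 => //; apply: mulr_gt0.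
    have h2 : s`_j 0 i <= 1 by apply: coord_le1 => //; case: (hg j).
    have -> : t%:R * (c j * s`_j 0 ib) = c j * (t%:R * s`_j 0 ib) by ring.
    by rewrite ler_pM2l //; apply: le_trans h1.
  rewrite pib mxE im.
  have -> : t%:R / (2 * t%:R) = 2^-1 :> rat by field.
  rewrite invr_ge1 ?ler1n //=.
have [j [cj gb]] : exists j : 'I_(size s), c j != 0 /\ s`_j 0 ib != 0.
  apply: NNPP => hne.
  have : p 0 ib = 0.
    rewrite hp big1 // => j _.
    case: (eqVneq (c j) 0) => [->|cj]; first by rewrite mul0r.
    case: (eqVneq (s`_j 0 ib) 0) => [->|gb]; first by rewrite mulr0.
    by exfalso; apply: hne; exists j.
  by rewrite pib => /eqP; rewrite invr_eq0 mulf_eq0 pnatr_eq0 (negPf tR).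
have [gia [gtb [_ [gti gdiff]]]] := hface j cj.
have [gN go gs1 gin] := hg j.
set g := s`_j in gia gtb gti gdiff gb gN go gs1 gin.
set h := g 0 ib in gtb gb.
have hp0 : 0 < h by rewrite lt0r gb go.
have [c' [hc'Z hc's]] := dual_gens hsm (hE ord0 m0).
have hc'i : forall i : 'I_m.+2, (i < m)%N -> c' 0 i = (i == ord0)%:R.
  by move=> i im; rewrite -dotv_delta hc's ?hE // delta_eq.
have hgd : dotv c' g = 0.
  rewrite hc's //; case: (eqVneq g (delta_mx 0 ord0)) => [e|//].
  by move: gb; rewrite /h e mxE (negPf ib0) andbF eqxx.
have hg0 : g 0 ord0 + h * c' 0 ib = 0.
  move: hgd; rewrite /dotv (sum_two (i0 := ord0) (i1 := ib)) 1?eq_sym //.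
    by rewrite hc'i // eqxx mul1r mulrC.
  move=> i i0 i1; case: (ltnP i m) => im.
    by rewrite hc'i // (negPf i0) mul0r.
  by rewrite (hrest i _ i1) ?gia ?mulr0 // -leqNgt.
set u : vec m.+2 := \row_i (if (i < m)%N then t%:R^-1
   else if i == ib then - (m%:R / t%:R) else 0).
have hu : inNG l a u.
  exists (l %/ t)%:Z => i.
  exists (if (i < m)%N then 0 else if i == ib then - ((l %/ t)%:Z - (alpha' %/ t)%:Z)
          else - (alpha' %/ t)%:Z).
  rewrite mxE; case: ifP => im.
    by rewrite ha1 // add0r -!pmulrn natr_divE //; field; rewrite lR tR.
  case: ifP => iib.
    rewrite (eqP iib) hib mulrNz intrB -!pmulrn !natr_divE // -hl !natrD.
    by field; rewrite tR andbT -!natrD hl.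
  have -> : i = ia by apply: hrest; rewrite ?im ?iib.
  by rewrite hia mulrNz -!pmulrn !natr_divE //; field; rewrite lR tR.
have hX : isZ (t%:R^-1 - m%:R / t%:R * c' 0 ib).
  have := hc'Z _ hu; rewrite /dotv (sum_two (i0 := ord0) (i1 := ib)) 1?eq_sym //.
    by rewrite !mxE m0 (negPf ibnm) eqxx hc'i // eqxx mul1r mulrC mulNr.
  move=> i i0 i1; rewrite mxE; case: ifP => im.
    by rewrite hc'i // (negPf i0) mul0r.
  by rewrite (negPf i1) mulr0.
have gle : forall i : 'I_m.+2, (i < m)%N -> g 0 i < 1.
  move=> i im; have ne : i != ib by apply: contra ibnm => /eqP <-.
  have := coord2_le1 ne go gs1; have := hp0; rewrite /h; lra.
have geq : forall i : 'I_m.+2, (i < m)%N -> g 0 i = g 0 ord0.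
  move=> i im; apply/eqP; rewrite -subr_eq0; apply/eqP.
  apply: isZ_small; first exact: gdiff.
    by have := go i; have := gle ord0 m0; lra.
  by have := go ord0; have := gle i im; lra.
have hsum : g 0 ord0 *+ m + h = 1.
  rewrite -gs1 (sum_ab _ hab) gia addr0 /h; congr (_ + _).
  have -> : \sum_(i < m) g 0 (inord i) = \sum_(i < m) g 0 ord0.
    apply: eq_bigr => i _; rewrite geq //.
    by rewrite inordK // (leq_trans (ltn_ord i)) // ltnW.
  by rewrite sumr_const card_ord.
have hR : (h : rat) != 0 by rewrite lt0r_neq0.
move: hsum; rewrite -mulr_natl => hsum.
have hc : c' 0 ib = - g 0 ord0 / h.
  have e1 : h * c' 0 ib = - g 0 ord0 by apply/eqP; rewrite -addr_eq0 addrC hg0.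
  by rewrite -e1; field.
have hX2 : isZ (t%:R * h)^-1.
  have <- : t%:R^-1 - m%:R / t%:R * c' 0 ib = (t%:R * h)^-1.
    rewrite hc; have -> : t%:R^-1 - m%:R / t%:R * (- g 0 ord0 / h) =
       (m%:R * g 0 ord0 + h) / (t%:R * h) by field; rewrite hR tR.
    by rewrite hsum div1r.
  exact: hX.
have th1 : t%:R * h = 1.
  have thp : 0 < t%:R * h by apply: mulr_gt0.
  have := isZ_ge1 gtb thp; rewrite le_eqVlt => /orP [/eqP <- //|lt1].
  exfalso; apply: (isZ_01 hX2); first by rewrite invr_gt0.
  by rewrite invf_lt1.
have [n hn] := gti ord0 m0.
have hmn : (m%:R * n%:~R + 1 = t%:R :> rat).
  rewrite -hn -[X in _ + X = _]th1.
  have -> : m%:R * (t%:R * g 0 ord0) + t%:R * h = t%:R * (m%:R * g 0 ord0 + h) by ring.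
  by rewrite hsum mulr1.
have n0 : (0 <= n)%R.
  rewrite -(ler0z rat) -hn; apply: mulr_ge0; [exact: ler0n | exact: go].
have hmn' : (m%:Z * n + 1 = t%:Z)%R.
  apply: (@intr_inj rat); by rewrite intrD intrM -!pmulrn.
have [n' en] : exists n' : nat, n = n'%:Z by exists `|n|%N; rewrite gez0_abs.
move: hmn'; rewrite en -PoszM -PoszD => /eqP; rewrite eqz_nat => /eqP <-.
by rewrite mulnC modnMDl modn_small.
Qed.

Theorem lemma6p20 (r l alpha beta : nat) :
  (4 <= r)%N -> (r <= l)%N -> (alpha + beta = l - (r - 2))%N ->
  (exists Sigma, @crepant_full_resolution r l (@wt r alpha beta) Sigma) ->
  (gcdn (gcdn alpha beta) l = 1 \/ gcdn (gcdn alpha beta) l = r - 2)%N /\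
  (gcdn (gcdn alpha beta) l = 1%N ->
     gcdn alpha l %% (r - 2) = 1 /\ gcdn beta l %% (r - 2) = 1)%N.
Proof.
move=> r4 rl hab [Sigma hres].
have [m em] : exists m, r = m.+2 by exists (r - 2)%N; lia.
subst r.
have e2 : (m.+2 - 2 = m)%N by lia.
rewrite e2 in hab *.
have m2 : (2 <= m)%N by lia.
have l0 : (0 < l)%N by lia.
have hl : (alpha + beta + m)%N = l by lia.
have Mlt : ((inord m : 'I_m.+2) : nat) = m by rewrite inordK.
have ha1 : forall i : 'I_m.+2, (i < m)%N -> @wt m.+2 alpha beta i = 1%N.
  by move=> i im; rewrite /wt e2 im.
have haM : @wt m.+2 alpha beta (inord m) = alpha by rewrite /wt e2 Mlt ltnn eqxx.
have haM1 : @wt m.+2 alpha beta ord_max = beta.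
  by rewrite /wt e2 /= ltnNge leqnSn /=; case: eqVneq => //= /eqP; lia.
set d := gcdn (gcdn alpha beta) l.
have dl : (d %| l)%N by apply: dvdn_gcdr.
have dA : (d %| alpha)%N by rewrite /d; apply: (dvdn_trans (dvdn_gcdl _ _)); apply: dvdn_gcdl.
have dB : (d %| beta)%N by rewrite /d; apply: (dvdn_trans (dvdn_gcdl _ _)); apply: dvdn_gcdr.
have dm : (d %| m)%N by rewrite -(dvdn_addr _ (dvdn_add dA dB)) hl.
have d0 : (0 < d)%N by rewrite /d gcdn_gt0 l0 orbT.
have dlem : (d <= m)%N by apply: dvdn_leq => //; lia.
split.
  case: (eqVneq d 1%N) => [->|d1]; first by left.
  case: (eqVneq d m) => [->|dm']; first by right.
  exfalso; apply: (part1 m2 l0 ha1 haM haM1 _ _ hres); rewrite -/d; lia.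
move=> d1; split.
  apply: (part2 (ia := inord m) (ib := ord_max) _ m2 l0 ha1 haM haM1 d1 hl hres).
  by left.
apply: (part2 (ia := ord_max) (ib := inord m) _ m2 l0 ha1 haM1 haM _ _ hres).
- by right.
- by rewrite [gcdn beta alpha]gcdnC.
- by rewrite [(beta + alpha)%N]addnC.
Qed.
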